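(* Let $\mathcal{D}=\langle\mathcal{I},\eta,P\rangle$ be a deductive database and $\mathcal{R}$ a request. A repair (respectively, relevant repair, constrained repair) for $(\mathcal{D},\mathcal{R})$ exists if and only if a weak repair (respectively, relevant weak repair, constrained weak repair) for $(\mathcal{D},\mathcal{R})$ exists.
   Context: Fix a finite set $\Pi$ of relation symbols, partitioned into base and derived predicates, and a countably infinite set $\mathit{Dom}$ of constants containing a null value $\bot$; $\mathit{Dom}_d=\mathit{Dom}\setminus\{\bot\}$. Facts are ground atoms over $\Pi$ and $\mathit{Dom}$ ($\mathit{At}$ = all facts); definite facts contain no $\bot$. For tuples, $t\preceq t'$ if each $t_i=t'_i$ or $t_i=\bot$; $a\approx b$ if some $s$ has $a\preceq s$, $b\preceq s$. For $S\subseteq\mathit{At}$: $S^{\Downarrow}=\{a:\exists b\in S, a\preceq b\}$, $S^{\Uparrow}=\{a:\exists b\in S, b\preceq a\}$, $S^{\approx}=\{a:\exists b\in S, b\approx a\}$, $S^\sim=S^\approx\setminus S^\Downarrow$. An (indefinite) database is $\mathcal{I}=\langle D,E\rangle$, $D,E$ finite sets of facts; $\mathcal{I}_t=D^\Downarrow$, $\mathcal{I}_u=D^\sim\setminus E^\Uparrow$. A possible world of $\mathcal{I}$ is a set $W$ of definite facts with $\mathcal{I}_t\subseteq W^\Downarrow$ and $W\subseteq\mathcal{I}_t\cup\mathcal{I}_u$; $W\models a$ iff $a\in W^\Downarrow$, else $W\models\neg a$. Integrity constraints (ICs) are first-order sentences over $\Pi$ and constants $\mathit{Dom}_d$; possible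 worlds are read as interpretations with domain $\mathit{Dom}_d$; $\mathcal{W}(\mathcal{I},\eta)$ is the set of possible worlds of $\mathcal{I}$ satisfying all ICs in $\eta$. A view $P$ is a safe Datalog program with negation (answer-set semantics), containing no $\bot$, with no base predicate in rule heads. A deductive database is $\mathcal{D}=\langle\mathcal{I},\eta,P\rangle$; it is consistent if $\mathcal{W}(\mathcal{I},\eta)\neq\emptyset$ and for every $W\in\mathcal{W}(\mathcal{I},\eta)$, $W\cup P$ has answer sets; $\mathcal{W}(\mathcal{D})$ is the family of all those answer sets. A fact $a$ has truth value $v_{\mathcal{D}}(a)=\mathbf{t}$ if $W\models a$ for all $W\in\mathcal{W}(\mathcal{D})$, $\mathbf{f}$ if $W\models\neg a$ for all such $W$, and $\mathbf{u}$ otherwise; truth values are ordered $\mathbf{f}\le\mathbf{u}\le\mathbf{t}$. Update actions are $+a^D,+a^E,-a^D,-a^E$ for base facts $a$ (insert into / delete from $D$ or $E$); an update is a set $U$ of update actions not containing both $+a^D,-a^D$ nor both $+a^E,-a^E$. $\langle D,E\rangle\circ U=\langle (D\cup U^D_+)\setminus U^D_-,(E\cup U^E_+)\setminus U^E_-\rangle$, where $U^D_+=\{a:+a^D\in U\}$ etc.; $\mathcal{D}\circ U=\langle\mathcal{I}\circ U,\eta,P\rangle$. A request is a pair $\mathcal{R}=(\mathcal{R}_t,\mathcal{R}_f)$ of disjoint sets of facts. A weak repair for $(\mathcal{D},\mathcal{R})$ is an update $U$ such that $\mathcal{D}\circ U$ is consistent, $v_{\mathcal{D}\circ U}(a)=\mathbf{t}$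 for all $a\in\mathcal{R}_t$ and $v_{\mathcal{D}\circ U}(a)=\mathbf{f}$ for all $a\in\mathcal{R}_f$. A constant is relevant if it occurs in $\mathcal{D}$ or $\mathcal{R}$ or is $\bot$; a predicate is relevant if it occurs in $\mathcal{D}$ or $\mathcal{R}$; a weak repair is relevant if all its constants and predicates are relevant. $NC(\mathcal{D},\mathcal{R},U)$ is the set of non-null constants occurring in $U$ but not in $\mathcal{D}$ or $\mathcal{R}$. For updates $U,V$, $U\sqsubseteq V$ if $NC(\mathcal{D},\mathcal{R},U)\subsetneq NC(\mathcal{D},\mathcal{R},V)$, or these sets are equal and for every base fact $a$: if $v_{\mathcal{D}}(a)=\mathbf{t}$ then $v_{\mathcal{D}\circ U}(a)\ge v_{\mathcal{D}\circ V}(a)$; if $v_{\mathcal{D}}(a)=\mathbf{f}$ then $v_{\mathcal{D}\circ V}(a)\ge v_{\mathcal{D}\circ U}(a)$; if $v_{\mathcal{D}}(a)=\mathbf{u}$ then $v_{\mathcal{D}\circ U}(a)=\mathbf{u}$ or $v_{\mathcal{D}\circ V}(a)=v_{\mathcal{D}\circ U}(a)$. A (relevant) repair is a $\sqsubseteq$-minimal (relevant) weak repair. A relevant (weak) repair $U$ is constrained if there is no non-null constant $a$ in $U$ such that replacing some occurrences of $a$ in $U$ by a constant $b\neq a$ (possibly $b=\bot$) yields a weak repair; a constrained repair is a $\sqsubseteq$-minimal constrained weak repair. *)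

(* Defs.v *)
From Stdlib Require Import List Arith Classical ClassicalEpsilon.
Import ListNotations.
Set Implicit Arguments.
Unset Asymmetric Patterns.

Record Sig : Type := {
  Pred : Type;
  arity : Pred -> nat;
  is_base : Pred -> bool }.

(* Dom = option nat : [Some n] are the non-null constants (Dom_d = nat),
   [None] is the null value ⊥. *)
Definition Const := option nat.
Definition null : Const := None.

Definition fact (Sg : Sig) : Type := (Pred Sg * list Const)%type.

Definition wf_fact Sg (a : fact Sg) : Prop := length (snd a) = arity Sg (fst a).
Definition definite Sg (a : fact Sg) : Prop := forall c, In c (snd a) -> c <> null.
Definition base_fact Sg (a : fact Sg) : Prop := wf_fact a /\ is_base Sg (fst a) = true.

Definition tup_le (ts us : list Const) : Prop :=
  Forall2 (fun x y => x = y \/ x = null) ts us.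
Definition fact_le Sg (a b : fact Sg) : Prop := fst a = fst b /\ tup_le (snd a) (snd b).
Definition fact_approx Sg (a b : fact Sg) : Prop :=
  exists s, fact_le a s /\ fact_le b s.

Definition fset Sg := fact Sg -> Prop.
Definition Down Sg (X : fset Sg) : fset Sg := fun a => exists b, X b /\ fact_le a b.
Definition Up Sg (X : fset Sg) : fset Sg := fun a => exists b, X b /\ fact_le b a.
Definition Approx Sg (X : fset Sg) : fset Sg := fun a => exists b, X b /\ fact_approx b a.
Definition Sim Sg (X : fset Sg) : fset Sg := fun a => Approx X a /\ ~ Down X a.

Record idb (Sg : Sig) : Type := { Dset : fset Sg; Eset : fset Sg }.

Definition finite_set Sg (X : fset Sg) : Prop := exists l, forall a, X a -> In a l.

Definition I_t Sg (I : idb Sg) : fset Sg := Down (Dset I).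
Definition I_u Sg (I : idb Sg) : fset Sg := fun a => Sim (Dset I) a /\ ~ Up (Eset I) a.

Definition possible_world Sg (I : idb Sg) (W : fset Sg) : Prop :=
  (forall a, W a -> definite a) /\
  (forall a, I_t I a -> Down W a) /\
  (forall a, W a -> I_t I a \/ I_u I a).

Definition fsat Sg (W : fset Sg) (a : fact Sg) : Prop := Down W a.

Inductive term : Type := TVar (x : nat) | TConst (c : nat).

Inductive formula (Sg : Sig) : Type :=
| FAtom (p : Pred Sg) (ts : list term)
| FEq (t1 t2 : term)
| FFalse
| FNot (f : formula Sg)
| FAnd (f g : formula Sg)
| FOr (f g : formula Sg)
| FImp (f g : formula Sg)
| FAll (x : nat) (f : formula Sg)
| FEx (x : nat) (f : formula Sg).
Arguments FAtom {Sg}. Arguments FEq {Sg}. Arguments FFalse {Sg}. Arguments FNot {Sg}.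
Arguments FAnd {Sg}. Arguments FOr {Sg}. Arguments FImp {Sg}. Arguments FAll {Sg}. Arguments FEx {Sg}.

Definition eval_term (rho : nat -> nat) (t : term) : nat :=
  match t with TVar x => rho x | TConst c => c end.

Definition upd (rho : nat -> nat) (x d : nat) : nat -> nat :=
  fun y => if Nat.eqb y x then d else rho y.

(* interpretation with domain Dom_d = nat given by a set W of definite facts *)
Fixpoint holds Sg (W : fset Sg) (rho : nat -> nat) (f : formula Sg) : Prop :=
  match f with
  | FAtom p ts => W (p, map (fun t => Some (eval_term rho t)) ts)
  | FEq t1 t2 => eval_term rho t1 = eval_term rho t2
  | FFalse => False
  | FNot g => ~ holds W rho g
  | FAnd g h => holds W rho g /\ holds W rho h
  | FOr g h => holds W rho g \/ holds W rho h
  | FImp g h => holds W rho g -> holds W rho h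
  | FAll x g => forall d, holds W (upd rho x d) g
  | FEx x g => exists d, holds W (upd rho x d) g
  end.

Definition term_vars (t : term) : list nat :=
  match t with TVar x => [x] | TConst _ => [] end.

Fixpoint free_vars Sg (f : formula Sg) : list nat :=
  match f with
  | FAtom _ ts => flat_map term_vars ts
  | FEq t1 t2 => term_vars t1 ++ term_vars t2
  | FFalse => []
  | FNot g => free_vars g
  | FAnd g h | FOr g h | FImp g h => free_vars g ++ free_vars h
  | FAll x g | FEx x g => filter (fun y => negb (Nat.eqb y x)) (free_vars g)
  end.

Fixpoint wf_formula Sg (f : formula Sg) : Prop :=
  match f with
  | FAtom p ts => length ts = arity Sg p
  | FEq _ _ | FFalse => True
  | FNot g | FAll _ g | FEx _ g => wf_formula g
  | FAnd g h | FOr g h | FImp g h => wf_formula g /\ wf_formula h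
  end.

Definition sentence Sg (f : formula Sg) : Prop := wf_formula f /\ free_vars f = [].

Definition satisfies_ics Sg (W : fset Sg) (eta : list (formula Sg)) : Prop :=
  forall f, In f eta -> forall rho, holds W rho f.

Fixpoint formula_consts Sg (f : formula Sg) : list nat :=
  match f with
  | FAtom _ ts => flat_map (fun t => match t with TConst c => [c] | _ => [] end) ts
  | FEq t1 t2 => flat_map (fun t => match t with TConst c => [c] | _ => [] end) [t1; t2]
  | FFalse => []
  | FNot g | FAll _ g | FEx _ g => formula_consts g
  | FAnd g h | FOr g h | FImp g h => formula_consts g ++ formula_consts h
  end.

Fixpoint formula_pred_in Sg (p : Pred Sg) (f : formula Sg) : Prop :=
  match f with
  | FAtom q _ => q = p
  | FEq _ _ | FFalse => False
  | FNot g | FAll _ g | FEx _ g => formula_pred_in p g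
  | FAnd g h | FOr g h | FImp g h => formula_pred_in p g \/ formula_pred_in p h
  end.

(* terms contain only variables and non-null constants: no ⊥ in programs *)
Record atom (Sg : Sig) : Type := { apred : Pred Sg; aargs : list term }.
Record rule (Sg : Sig) : Type := { rhead : atom Sg; rpos : list (atom Sg); rneg : list (atom Sg) }.

Definition atom_vars Sg (a : atom Sg) : list nat := flat_map term_vars (aargs a).
Definition atom_consts Sg (a : atom Sg) : list nat :=
  flat_map (fun t => match t with TConst c => [c] | _ => [] end) (aargs a).
Definition wf_atom Sg (a : atom Sg) : Prop := length (aargs a) = arity Sg (apred a).

Definition safe_rule Sg (r : rule Sg) : Prop :=
  forall x, (In x (atom_vars (rhead r)) \/ exists n, In n (rneg r) /\ In x (atom_vars n)) ->
  exists q, In q (rpos r) /\ In x (atom_vars q).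

Definition rule_atoms Sg (r : rule Sg) : list (atom Sg) := rhead r :: rpos r ++ rneg r.

Definition wf_program Sg (P : list (rule Sg)) : Prop :=
  forall r, In r P ->
    safe_rule r /\ is_base Sg (apred (rhead r)) = false /\
    (forall a, In a (rule_atoms r) -> wf_atom a).

Definition ground_atom Sg (sigma : nat -> nat) (a : atom Sg) : fact Sg :=
  (apred a, map (fun t => Some (eval_term sigma t)) (aargs a)).

(* N is a model of the Gelfond–Lifschitz reduct of (W ∪ ground(P)) w.r.t. M *)
Definition reduct_model Sg (W : fset Sg) (P : list (rule Sg)) (M N : fset Sg) : Prop :=
  (forall a, W a -> N a) /\
  (forall r sigma, In r P ->
     (forall n, In n (rneg r) -> ~ M (ground_atom sigma n)) ->
     (forall q, In q (rpos r) -> N (ground_atom sigma q)) ->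
     N (ground_atom sigma (rhead r))).

Definition answer_set Sg (W : fset Sg) (P : list (rule Sg)) (M : fset Sg) : Prop :=
  reduct_model W P M M /\ (forall N, reduct_model W P M N -> forall a, M a -> N a).

Record ddb (Sg : Sig) : Type := { dI : idb Sg; deta : list (formula Sg); dP : list (rule Sg) }.

Definition wf_ddb Sg (D : ddb Sg) : Prop :=
  finite_set (Dset (dI D)) /\ finite_set (Eset (dI D)) /\
  (forall a, Dset (dI D) a -> wf_fact a) /\ (forall a, Eset (dI D) a -> wf_fact a) /\
  (forall f, In f (deta D) -> sentence f) /\ wf_program (dP D).

Definition ic_world Sg (D : ddb Sg) (W : fset Sg) : Prop :=
  possible_world (dI D) W /\ satisfies_ics W (deta D).

Definition consistent Sg (D : ddb Sg) : Prop :=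
  (exists W, ic_world D W) /\
  (forall W, ic_world D W -> exists M, answer_set W (dP D) M).

Definition in_WD Sg (D : ddb Sg) (M : fset Sg) : Prop :=
  exists W, ic_world D W /\ answer_set W (dP D) M.

Inductive tv : Type := TT | UU | FF.

Definition tval Sg (D : ddb Sg) (a : fact Sg) : tv :=
  if excluded_middle_informative (forall M, in_WD D M -> fsat M a) then TT
  else if excluded_middle_informative (forall M, in_WD D M -> ~ fsat M a) then FF
  else UU.

Definition tv_rank (v : tv) : nat := match v with FF => 0 | UU => 1 | TT => 2 end.
Definition tv_le (v w : tv) : Prop := tv_rank v <= tv_rank w.

Inductive kind : Type := InsD | InsE | DelD | DelE.
Definition action (Sg : Sig) : Type := (kind * fact Sg)%type.
Definition update (Sg : Sig) : Type := list (action Sg).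

Definition is_update Sg (U : update Sg) : Prop :=
  (forall k a, In (k, a) U -> base_fact a) /\
  (forall a, ~ (In (InsD, a) U /\ In (DelD, a) U)) /\
  (forall a, ~ (In (InsE, a) U /\ In (DelE, a) U)).

Definition apply_idb Sg (I : idb Sg) (U : update Sg) : idb Sg :=
  {| Dset := fun a => (Dset I a \/ In (InsD, a) U) /\ ~ In (DelD, a) U;
     Eset := fun a => (Eset I a \/ In (InsE, a) U) /\ ~ In (DelE, a) U |}.

Definition apply_ddb Sg (D : ddb Sg) (U : update Sg) : ddb Sg :=
  {| dI := apply_idb (dI D) U; deta := deta D; dP := dP D |}.

Record request (Sg : Sig) : Type := { Rt : list (fact Sg); Rf : list (fact Sg) }.

Definition wf_request Sg (R : request Sg) : Prop :=
  (forall a, In a (Rt R) -> wf_fact a) /\ (forall a, In a (Rf R) -> wf_fact a) /\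
  (forall a, In a (Rt R) -> ~ In a (Rf R)).

Definition weak_repair Sg (D : ddb Sg) (R : request Sg) (U : update Sg) : Prop :=
  is_update U /\ consistent (apply_ddb D U) /\
  (forall a, In a (Rt R) -> tval (apply_ddb D U) a = TT) /\
  (forall a, In a (Rf R) -> tval (apply_ddb D U) a = FF).

Definition const_in_fact Sg (c : nat) (a : fact Sg) : Prop := In (Some c) (snd a).

Definition const_in_ddb Sg (D : ddb Sg) (c : nat) : Prop :=
  (exists a, Dset (dI D) a /\ const_in_fact c a) \/
  (exists a, Eset (dI D) a /\ const_in_fact c a) \/
  (exists f, In f (deta D) /\ In c (formula_consts f)) \/
  (exists r a, In r (dP D) /\ In a (rule_atoms r) /\ In c (atom_consts a)).

Definition pred_in_ddb Sg (D : ddb Sg) (p : Pred Sg) : Prop :=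
  (exists a, Dset (dI D) a /\ fst a = p) \/
  (exists a, Eset (dI D) a /\ fst a = p) \/
  (exists f, In f (deta D) /\ formula_pred_in p f) \/
  (exists r a, In r (dP D) /\ In a (rule_atoms r) /\ apred a = p).

Definition const_in_request Sg (R : request Sg) (c : nat) : Prop :=
  exists a, (In a (Rt R) \/ In a (Rf R)) /\ const_in_fact c a.

Definition pred_in_request Sg (R : request Sg) (p : Pred Sg) : Prop :=
  exists a, (In a (Rt R) \/ In a (Rf R)) /\ fst a = p.

Definition const_in_update Sg (U : update Sg) (c : nat) : Prop :=
  exists k a, In (k, a) U /\ const_in_fact c a.

Definition relevant_const Sg (D : ddb Sg) (R : request Sg) (c : Const) : Prop :=
  match c with None => True | Some n => const_in_ddb D n \/ const_in_request R n end.

Definition relevant_pred Sg (D : ddb Sg) (R : request Sg) (p : Pred Sg) : Prop :=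
  pred_in_ddb D p \/ pred_in_request R p.

Definition relevant_update Sg (D : ddb Sg) (R : request Sg) (U : update Sg) : Prop :=
  forall k a, In (k, a) U ->
    relevant_pred D R (fst a) /\ (forall c, In c (snd a) -> relevant_const D R c).

Definition NC Sg (D : ddb Sg) (R : request Sg) (U : update Sg) (c : nat) : Prop :=
  const_in_update U c /\ ~ const_in_ddb D c /\ ~ const_in_request R c.

Definition upd_le Sg (D : ddb Sg) (R : request Sg) (U V : update Sg) : Prop :=
  ((forall c, NC D R U c -> NC D R V c) /\ (exists c, NC D R V c /\ ~ NC D R U c)) \/
  ((forall c, NC D R U c <-> NC D R V c) /\
   (forall a, base_fact a ->
      (tval D a = TT -> tv_le (tval (apply_ddb D V) a) (tval (apply_ddb D U) a)) /\
      (tval D a = FF -> tv_le (tval (apply_ddb D U) a) (tval (apply_ddb D V) a)) /\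
      (tval D a = UU -> tval (apply_ddb D U) a = UU \/
                        tval (apply_ddb D V) a = tval (apply_ddb D U) a))).

Definition minimal_in Sg (D : ddb Sg) (R : request Sg) (C : update Sg -> Prop) (U : update Sg) : Prop :=
  C U /\ (forall V, C V -> upd_le D R V U -> upd_le D R U V).

Definition repair Sg (D : ddb Sg) (R : request Sg) (U : update Sg) : Prop :=
  minimal_in D R (weak_repair D R) U.

Definition relevant_weak_repair Sg (D : ddb Sg) (R : request Sg) (U : update Sg) : Prop :=
  weak_repair D R U /\ relevant_update D R U.

Definition relevant_repair Sg (D : ddb Sg) (R : request Sg) (U : update Sg) : Prop :=
  minimal_in D R (relevant_weak_repair D R) U.

Definition repl_action Sg (c : nat) (b : Const) (u v : action Sg) : Prop :=
  fst u = fst v /\ fst (snd u) = fst (snd v) /\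
  Forall2 (fun x y => y = x \/ (x = Some c /\ y = b)) (snd (snd u)) (snd (snd v)).

Definition replaces Sg (c : nat) (b : Const) (U V : update Sg) : Prop :=
  Forall2 (repl_action c b) U V /\ U <> V.

(* U is given as a duplicate-free list, so that occurrences in U are
   occurrences in the set U *)
Definition constrained_weak_repair Sg (D : ddb Sg) (R : request Sg) (U : update Sg) : Prop :=
  relevant_weak_repair D R U /\ NoDup U /\
  ~ (exists c b V, const_in_update U c /\ b <> Some c /\
                   replaces c b U V /\ weak_repair D R V).

Definition constrained_repair Sg (D : ddb Sg) (R : request Sg) (U : update Sg) : Prop :=
  minimal_in D R (constrained_weak_repair D R) U.

(* Main.v *)
Require Import Defs.
From Stdlib Require Import List Arith Classical ClassicalEpsilon FunctionalExtensionality PropExtensionality Lia.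
Import ListNotations.
Require Import Defs.
Set Implicit Arguments.

Lemma fin_min {K : Type} (T : K -> K -> Prop) (Trefl : forall x, T x x)
  (Ttrans : forall x y z, T x y -> T y z -> T x z) :
  forall Ks (P : K -> Prop), (exists x, P x) -> (forall x, P x -> In x Ks) ->
  exists x, P x /\ forall y, P y -> T y x -> T x y.
Proof.
  induction Ks as [|k Ks IH]; intros P [x0 Hx0] HP.
  - destruct (HP _ Hx0).
  - destruct (classic (exists x, P x /\ x <> k)) as [Hne|Hne].
    + destruct (IH (fun x => P x /\ x <> k) Hne) as [m [[Pm Hmk] Hm]].
      { intros x [Px Hxk]. destruct (HP _ Px); [congruence|auto]. }
      destruct (classic (P k /\ T k m /\ ~ T m k)) as [[Pk [Tkm nTmk]]|Hc].
      * exists k. split; [exact Pk|]. intros y Py Tyk.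
        destruct (classic (y = k)) as [->|Hyk]; [apply Trefl|].
        apply Ttrans with m; [exact Tkm|]. apply Hm; [auto|]. eapply Ttrans; eauto.
      * exists m. split; [exact Pm|]. intros y Py Tym.
        destruct (classic (y = k)) as [->|Hyk].
        -- apply NNPP. intro nT. apply Hc. auto.
        -- apply Hm; auto.
    + exists x0. split; [exact Hx0|]. intros y Py _.
      assert (y = k) by (apply NNPP; intro; apply Hne; eauto).
      assert (x0 = k) by (apply NNPP; intro; apply Hne; eauto).
      subst. apply Trefl.
Qed.

Definition Tle (Sg : Sig) (D : ddb Sg) (X Y : ddb Sg) : Prop :=
  forall a, base_fact a ->
      (tval D a = TT -> tv_le (tval Y a) (tval X a)) /\
      (tval D a = FF -> tv_le (tval X a) (tval Y a)) /\
      (tval D a = UU -> tval X a = UU \/ tval Y a = tval X a).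

Lemma Tle_refl Sg (D : ddb Sg) X : @Tle Sg D X X.
Proof. intros a _. unfold tv_le. repeat split; auto. Qed.

Lemma Tle_trans Sg (D : ddb Sg) X Y Z : @Tle Sg D X Y -> @Tle Sg D Y Z -> @Tle Sg D X Z.
Proof.
  intros H1 H2 a Ha. destruct (H1 a Ha) as [A1 [B1 C1]]. destruct (H2 a Ha) as [A2 [B2 C2]].
  unfold tv_le in *. split; [|split].
  - intro h. specialize (A1 h). specialize (A2 h). lia.
  - intro h. specialize (B1 h). specialize (B2 h). lia.
  - intro h. destruct (C1 h) as [e|e]; auto. destruct (C2 h) as [e'|e']; [left; congruence|].
    right; congruence.
Qed.

Definition fact_consts (Sg : Sig) (a : fact Sg) : list nat :=
  flat_map (fun o => match o with Some c => [c] | None => [] end) (snd a).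

Lemma fact_consts_in (Sg : Sig) c (a : fact Sg) : const_in_fact c a -> In c (fact_consts a).
Proof. intro H. unfold fact_consts. apply in_flat_map. exists (Some c). simpl; auto. Qed.

Lemma ddb_consts (Sg : Sig) (D : ddb Sg) : wf_ddb D -> exists l, forall c, const_in_ddb D c -> In c l.
Proof.
  intros [[ld Hd] [[le He] _]].
  exists (flat_map (@fact_consts Sg) ld ++ flat_map (@fact_consts Sg) le ++
          flat_map (@formula_consts Sg) (deta D) ++
          flat_map (fun r => flat_map (@atom_consts Sg) (rule_atoms r)) (dP D)).
  intros c [[a [Ha Hc]]|[[a [Ha Hc]]|[[f [Hf Hc]]|[r [a [Hr [Ha Hc]]]]]]];
  repeat rewrite in_app_iff.
  - left. apply in_flat_map. exists a. split; auto. apply fact_consts_in; auto.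
  - right; left. apply in_flat_map. exists a. split; auto. apply fact_consts_in; auto.
  - right; right; left. apply in_flat_map. eauto.
  - right; right; right. apply in_flat_map. exists r. split; auto. apply in_flat_map. eauto.
Qed.

Fixpoint tuples (n : nat) (L : list Const) : list (list Const) :=
  match n with
  | 0 => [[]]
  | S n => flat_map (fun x => map (cons x) (tuples n L)) L
  end.

Lemma tuples_in L : forall t n, length t = n -> (forall x, In x t -> In x L) -> In t (tuples n L).
Proof.
  induction t as [|x t IH]; intros n Hn HL; subst; simpl; auto.
  apply in_flat_map. exists x. split; [apply HL; simpl; auto|].
  apply in_map. apply IH; auto. intros; apply HL; simpl; auto.
Qed.

Definition actsU (Sg : Sig) (lp : list (Pred Sg)) (L : list Const) : list (action Sg) :=
  flat_map (fun k => flat_map (fun p => map (fun t => (k, (p, t))) (tuples (arity Sg p) L)) lp)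
    [InsD; InsE; DelD; DelE].

Fixpoint sublists {A : Type} (l : list A) : list (list A) :=
  match l with
  | [] => [[]]
  | x :: l => map (cons x) (sublists l) ++ sublists l
  end.

Lemma filter_sublists {A : Type} (f : A -> bool) l : In (filter f l) (sublists l).
Proof.
  induction l as [|x l IH]; simpl; auto.
  destruct (f x); apply in_app_iff; [left; apply in_map|right]; auto.
Qed.

Definition memb {A : Type} (V : list A) (x : A) : bool :=
  if excluded_middle_informative (In x V) then true else false.

Lemma apply_ext (Sg : Sig) (D : ddb Sg) U V : (forall x, In x U <-> In x V) -> apply_ddb D U = apply_ddb D V.
Proof.
  intro H. unfold apply_ddb, apply_idb. f_equal. f_equal; apply functional_extensionality;
  intro a; apply propositional_extensionality; rewrite !H; tauto.
Qed.

Lemma fin_case (Sg : Sig) (Hfin : exists l : list (Pred Sg), forall p, In p l)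
  (D : ddb Sg) (R : request Sg) (HD : wf_ddb D)
  (C : update Sg -> Prop) (HC : forall U, C U -> is_update U) U l :
  C U ->
  (forall V, C V -> ~ ((forall c, NC D R V c -> NC D R U c) /\ exists c, NC D R U c /\ ~ NC D R V c)) ->
  (forall c, NC D R U c -> In c l) ->
  exists W, minimal_in D R C W.
Proof.
  intros CU Hns Hl.
  destruct Hfin as [lp Hlp]. destruct (ddb_consts HD) as [lD HlD].
  set (lR := flat_map (@fact_consts Sg) (Rt R ++ Rf R)).
  set (L := None :: map Some (lD ++ lR ++ l)).
  set (A := @actsU Sg lp L).
  set (C' := fun V => C V /\ (forall c, NC D R V c <-> NC D R U c)).
  destruct (fin_min (@Tle Sg D) (@Tle_refl Sg D) (@Tle_trans Sg D)
     (map (fun s => apply_ddb D s) (sublists A))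
     (fun X => exists V, C' V /\ X = apply_ddb D V)) as [X [[W [[CW HW] ->]] HX]].
  - exists (apply_ddb D U). exists U. split; auto. split; auto. tauto.
  - intros X [V [[CV HV] ->]].
    assert (HA : forall x, In x V -> In x A).
    { intros [k [p t]] Hin. destruct (HC V CV) as [Hb _].
      destruct (Hb _ _ Hin) as [Hwf _]. unfold wf_fact in Hwf; simpl in Hwf.
      unfold A, actsU. apply in_flat_map. exists k. split; [destruct k; simpl; tauto|].
      apply in_flat_map. exists p. split; [auto|]. apply (in_map (fun t => (k, (p, t)))).
      apply tuples_in; auto. intros [c|] Hx; [|simpl; auto].
      simpl. right. apply in_map. rewrite !in_app_iff.
      destruct (classic (const_in_ddb D c)) as [h|h]; [left; auto|].
      destruct (classic (const_in_request R c)) as [h'|h'].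
      + right; left. destruct h' as [a [Ha Hc]]. unfold lR. apply in_flat_map.
        exists a. rewrite in_app_iff. split; auto. apply fact_consts_in; auto.
      + right; right. apply Hl. apply HV. split; [|auto].
        exists k, (p, t). split; auto. }
    rewrite (@apply_ext Sg D V (filter (memb V) A)).
    + apply in_map. apply filter_sublists.
    + intro x. rewrite filter_In. unfold memb.
      destruct (excluded_middle_informative (In x V)); split; intro h; try tauto; try (split; auto).
      destruct h; discriminate.
  - exists W. split; [exact CW|]. intros V CV [[H1 [c [H2 H3]]]|[H1 H2]].
    + exfalso. apply (Hns V CV). split.
      * intros c' h. apply HW. auto.
      * exists c. split; auto. apply HW; auto.
    + right. split; [intro c; split; apply H1|].
      apply HX; [|exact H2]. exists V. split; auto. split; auto.
      intro c. rewrite H1. apply HW.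
Qed.

Lemma min_exists (Sg : Sig) (Hfin : exists l : list (Pred Sg), forall p, In p l)
  (D : ddb Sg) (R : request Sg) (HD : wf_ddb D)
  (C : update Sg -> Prop) (HC : forall U, C U -> is_update U) :
  (exists U, C U) -> exists U, minimal_in D R C U.
Proof.
  intros [U0 HU0].
  assert (Hgen : forall n U l, C U -> length l <= n -> (forall c, NC D R U c -> In c l) ->
            exists W, minimal_in D R C W).
  { induction n as [|n IH]; intros U l CU Hlen Hl;
    (destruct (classic (exists V, C V /\ (forall c, NC D R V c -> NC D R U c) /\
                        exists c, NC D R U c /\ ~ NC D R V c)) as [Hex|Hne];
     [|eapply fin_case; eauto; intros V CV h; apply Hne; exists V; tauto]).
    - destruct Hex as [V [_ [_ [c [Hc _]]]]]. destruct l; [destruct (Hl c Hc)|simpl in Hlen; lia].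
    - destruct Hex as [V [CV [Hsub [c [Hc Hnc]]]]].
      apply (IH V (remove Nat.eq_dec c l) CV).
      + pose proof (remove_length_lt Nat.eq_dec l c (Hl c Hc)). lia.
      + intros c' h. apply in_in_remove.
        * intro; subst; auto.
        * apply Hl; auto. }
  apply (Hgen _ U0 (flat_map (fun u => fact_consts (snd u)) U0) HU0 (le_n _)).
  intros c [[k [a [Hin Hc]]] _]. apply in_flat_map. exists (k, a). split; auto.
  apply fact_consts_in; auto.
Qed.

Theorem proposition2 (Sg : Sig) (Hfin : exists l : list (Pred Sg), forall p, In p l)
  (D : ddb Sg) (R : request Sg) :
  wf_ddb D -> wf_request R ->
  ((exists U, repair D R U) <-> (exists U, weak_repair D R U)) /\
  ((exists U, relevant_repair D R U) <-> (exists U, relevant_weak_repair D R U)) /\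
  ((exists U, constrained_repair D R U) <-> (exists U, constrained_weak_repair D R U)).
Proof.
  intros HD _. split; [|split]; split.
  - intros [U [H _]]; eauto.
  - apply min_exists; auto. intros U [h _]; exact h.
  - intros [U [H _]]; eauto.
  - apply min_exists; auto. intros U [[h _] _]; exact h.
  - intros [U [H _]]; eauto.
  - apply min_exists; auto. intros U [[[h _] _] _]; exact h.
Qed.
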